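(* Let $\mathfrak I_M=\{\langle v,v\rangle\}\cup\{\langle M^kv,M^kv\rangle:1\le k<d\}$, where $\langle a,b\rangle=\sum_ia_ib_i$. Then $\mathfrak I_M$ generates both the field $\mathbb C(\mathbb C^d\oplus\mathfrak{so}(d,\mathbb C))^{O_d(\mathbb C)}$ and the field $\mathbb R(\mathbb R^d\oplus\mathfrak{so}(d,\mathbb R))^{O_d(\mathbb R)}$, and separates orbits on $\mathbb C^d\oplus\mathfrak{so}(d,\mathbb C)$ (for $O_d(\mathbb C)$) and on $\mathbb R^d\oplus\mathfrak{so}(d,\mathbb R)$ (for $O_d(\mathbb R)$).
   Context: Fix $d\ge2$. Elements of $\mathbb K^d\oplus\mathfrak{so}(d,\mathbb K)$ ($\mathbb K=\mathbb R$ or $\mathbb C$) are pairs $(v,M)$, $v\in\mathbb K^d$, $M$ a skew-symmetric $d\times d$ matrix over $\mathbb K$; $O_d(\mathbb K)=\{A\in\mathbb K^{d\times d}:AA^\top=I\}$ acts by $A\cdot(v,M)=(Av,AMA^\top)$. $\mathbb K(X)^G$ denotes the field of $G$-invariant rational functions on $X$ with coefficients in $\mathbb K$; ''generates'' means generates as a field over $\mathbb K$. A set of invariants separates orbits if there is a non-empty Zariski-open subset on which two points lie in the same orbit if and only if all invariants in the set take equal values on them. *)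

(* Defs.v *)
From HB Require Import structures.
From mathcomp Require Import all_boot all_order all_algebra.
From mathcomp Require Import mpoly.
From mathcomp Require Import complex.
From mathcomp Require Import reals.

Set Implicit Arguments.
Unset Strict Implicit.
Unset Printing Implicit Defensive.

Import Order.TTheory GRing.Theory Num.Theory.
Local Open Scope ring_scope.

Section Defs.
Variables (K : fieldType) (d : nat).

(* points (v, M) of K^d (+) gl(d,K); the space K^d (+) so(d,K) is cut out
   by [inV] *)
Definition pt := ('cV[K]_d * 'M[K]_d)%type.

Definition inV (x : pt) : Prop := x.2^T = - x.2.

Definition orthogonal (A : 'M[K]_d) : Prop := A *m A^T = 1%:M.

Definition act (A : 'M[K]_d) (x : pt) : pt := (A *m x.1, A *m x.2 *m A^T).

Definition coords (x : pt) : 'I_(d + d * d) -> K :=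
  fun i => row_mx x.1^T (mxvec x.2) 0 i.

(* polynomial functions on K^d (+) so(d,K) are the restrictions of
   polynomials in the coordinates of K^d (+) gl(d,K) *)
Definition pfun (p : {mpoly K[d + d * d]}) (x : pt) : K := p.@[coords x].

(* a rational function is represented by p / q, with q not identically zero
   on the space; two representatives p/q, p'/q' are equal iff p q' = p' q
   on the space *)
Definition nonzero_on_V (q : {mpoly K[d + d * d]}) : Prop :=
  exists x, inV x /\ pfun q x != 0.

Definition invariant_rat (p q : {mpoly K[d + d * d]}) : Prop :=
  forall A, orthogonal A -> forall x, inV x ->
    pfun p (act A x) * pfun q x = pfun p x * pfun q (act A x).

Definition dotv (a b : 'cV[K]_d) : K := \sum_(i < d) a i 0 * b i 0.

Definition Mpowv (k : nat) (x : pt) : 'cV[K]_d := iter k (mulmx x.2) x.1.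

Definition gen (k : 'I_d) (x : pt) : K := dotv (Mpowv k x) (Mpowv k x).

Definition genv (x : pt) : 'I_d -> K := fun k => gen k x.

Definition generates_invariant_field : Prop :=
  (* each element of I_M is a (polynomial, hence rational) function *)
  (forall k : 'I_d, exists p : {mpoly K[d + d * d]},
      forall x, inV x -> pfun p x = gen k x) /\
  (forall k : 'I_d, forall A, orthogonal A -> forall x, inV x ->
      gen k (act A x) = gen k x) /\
  (forall p q : {mpoly K[d + d * d]}, nonzero_on_V q -> invariant_rat p q ->
     exists a b : {mpoly K[d]},
       (exists x, inV x /\ b.@[genv x] != 0) /\
       (forall x, inV x -> pfun p x * b.@[genv x] = pfun q x * a.@[genv x])).

(* Zariski-open subsets of K^d (+) so(d,K): complements of the common zero
   set of a family S of polynomial functions *)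
Definition zariski_open_set (S : pred {mpoly K[d + d * d]}) (x : pt) : Prop :=
  inV x /\ exists p, S p /\ pfun p x != 0.

Definition separates_orbits : Prop :=
  exists S : pred {mpoly K[d + d * d]},
    (exists x, zariski_open_set S x) /\
    forall x y, zariski_open_set S x -> zariski_open_set S y ->
      ((exists A, orthogonal A /\ act A x = y) <-> (forall k, gen k x = gen k y)).

End Defs.

(* Main.v *)
Require Import Defs.
From HB Require Import structures.
From mathcomp Require Import all_boot all_order all_algebra.
From mathcomp Require Import mpoly.
From mathcomp Require Import complex.
From mathcomp Require Import reals.
From mathcomp Require Import zify ring.
Set Implicit Arguments.
Unset Strict Implicit.
Unset Printing Implicit Defensive.
Import Order.TTheory GRing.Theory Num.Theory.
Local Open Scope ring_scope.


Section Basic.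
Variable (K : numFieldType) (d : nat).
Implicit Types (x y : pt K d) (A : 'M[K]_d).

Lemma orthoC A : Defs.orthogonal A -> A^T *m A = 1%:M.
Proof. by move=> h; apply: mulmx1C. Qed.

Lemma ortho_tr A : Defs.orthogonal A -> Defs.orthogonal A^T.
Proof. by move=> h; rewrite /Defs.orthogonal trmxK orthoC. Qed.

Lemma ortho_mul A B : Defs.orthogonal A -> Defs.orthogonal B -> Defs.orthogonal (A *m B).
Proof.
move=> hA hB; rewrite /Defs.orthogonal trmx_mul mulmxA -(mulmxA A) hB mulmx1 //.
Qed.

Lemma act_comp A B x : act A (act B x) = act (A *m B) x.
Proof. by rewrite /act /= trmx_mul !mulmxA. Qed.

Lemma act1 x : act 1%:M x = x.
Proof. by case: x => v M; rewrite /act /= trmx1 !mul1mx mulmx1. Qed.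

Lemma inV_act A x : inV x -> inV (act A x).
Proof.
rewrite /inV /= => h; rewrite !trmx_mul trmxK h mulNmx mulmxN mulmxA //.
Qed.

Lemma Mpowv_act A x k : Defs.orthogonal A ->
  Mpowv k (act A x) = A *m Mpowv k x.
Proof.
move=> hA; elim: k => [|k IH] //=; rewrite IH /=.
by rewrite -!mulmxA (mulmxA A^T) orthoC // mul1mx.
Qed.

Lemma dotvE (a b : 'cV[K]_d) : dotv a b = (a^T *m b) 0 0.
Proof. by rewrite /dotv mxE; apply: eq_bigr => i _; rewrite mxE. Qed.

Lemma dotvC (a b : 'cV[K]_d) : dotv a b = dotv b a.
Proof. by rewrite /dotv; apply: eq_bigr => i _; rewrite mulrC. Qed.

Lemma dotv_mull (N : 'M[K]_d) a b : dotv (N *m a) b = dotv a (N^T *m b).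
Proof. by rewrite !dotvE trmx_mul mulmxA. Qed.

Lemma dotv_act A (a b : 'cV[K]_d) : Defs.orthogonal A -> dotv (A *m a) (A *m b) = dotv a b.
Proof. by move=> hA; rewrite dotv_mull mulmxA orthoC // mul1mx. Qed.

Lemma gen_inv (k : 'I_d) A x : Defs.orthogonal A -> gen k (act A x) = gen k x.
Proof. by move=> hA; rewrite /gen Mpowv_act // dotv_act. Qed.

Lemma MpowvS k x : Mpowv k.+1 x = x.2 *m Mpowv k x.
Proof. by []. Qed.

Lemma dot_shift x j l : inV x ->
  dotv (Mpowv j.+1 x) (Mpowv l x) = - dotv (Mpowv j x) (Mpowv l.+1 x).
Proof. by move=> hx; rewrite MpowvS dotv_mull hx mulNmx /dotv -sumrN; apply: eq_bigr => i _; rewrite mxE mulrN. Qed.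

Lemma dot_gen x j l : inV x ->
  dotv (Mpowv j x) (Mpowv l x) = (-1) ^+ j * dotv (Mpowv 0 x) (Mpowv (j + l) x).
Proof.
move=> hx; elim: j l => [|j IH] l; first by rewrite expr0 mul1r.
by rewrite dot_shift // IH addSnnS exprS mulN1r mulNr.
Qed.

Definition gN x m := dotv (Mpowv m x) (Mpowv m x).

Lemma dot_odd x m : inV x -> dotv (Mpowv 0 x) (Mpowv m.*2.+1 x) = 0.
Proof.
move=> hx; have h1 := dot_gen m m.+1 hx; have h2 := dot_gen m.+1 m hx.
have e1 : (m + m.+1 = m.*2.+1)%N by rewrite addnS addnn.
have e2 : (m.+1 + m = m.*2.+1)%N by rewrite addSn addnn.
rewrite e1 in h1; rewrite e2 dotvC h1 exprS mulN1r mulNr in h2.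
move: h2; set X := _ * dotv _ _ => /eqP; rewrite -subr_eq0 opprK -mulr2n -mulr_natl.
rewrite mulf_eq0 pnatr_eq0 /= /X mulf_eq0 signr_eq0 /= => /eqP //.
Qed.

Lemma dot_even x m : inV x -> dotv (Mpowv 0 x) (Mpowv m.*2 x) = (-1) ^+ m * gN x m.
Proof.
move=> hx; rewrite /gN (dot_gen m m hx) mulrA -expr2 sqrr_sign mul1r.
by rewrite addnn.
Qed.

Definition gramv (g : nat -> K) (j l : nat) : K :=
  if odd (j + l) then 0 else (-1) ^+ (j + (j + l)./2) * g (j + l)./2.

Lemma dot_gram x j l : inV x -> dotv (Mpowv j x) (Mpowv l x) = gramv (gN x) j l.
Proof.
move=> hx; rewrite dot_gen // /gramv; case: ifP => ho.
  by rewrite -[(j + l)%N]odd_double_half ho dot_odd // mulr0.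
rewrite -[in X in dotv _ (Mpowv X _)](odd_double_half (j + l)%N) ho add0n dot_even //.
by rewrite mulrA -exprD.
Qed.

End Basic.


Section Sep.
Variable (K : numFieldType) (n : nat).
Local Notation d := n.+1.
Implicit Types (x y : pt K d) (A : 'M[K]_d).

Definition Bk x : 'M[K]_d := \matrix_(i, k) (Mpowv k x) i 0.

Lemma BtB x : (Bk x)^T *m Bk x = \matrix_(j, k) dotv (Mpowv j x) (Mpowv k x).
Proof. by apply/matrixP => j k; rewrite !mxE; apply: eq_bigr => i _; rewrite !mxE. Qed.

Lemma MBk x : x.2 *m Bk x = \matrix_(i, k) (Mpowv k.+1 x) i 0.
Proof. by apply/matrixP => i k; rewrite !mxE; apply: eq_bigr => r _; rewrite !mxE. Qed.

Lemma BtMB x : (Bk x)^T *m (x.2 *m Bk x) = \matrix_(j, k) dotv (Mpowv j x) (Mpowv k.+1 x).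
Proof. by rewrite MBk; apply/matrixP => j k; rewrite !mxE; apply: eq_bigr => i _; rewrite !mxE. Qed.

Lemma Be0 x : Bk x *m delta_mx 0 0 = x.1.
Proof. by rewrite -colE; apply/matrixP => i j; rewrite !mxE ord1. Qed.

Definition gfun (g : 'I_d -> K) (m : nat) : K := g (inord m).

Lemma gN_gen x m : (m < d)%N -> gN x m = gfun (genv x) m.
Proof. by move=> hm; rewrite /gfun /genv /gen inordK. Qed.

Lemma gram_eq x y j l : inV x -> inV y -> genv x =1 genv y -> (j + l <= n.*2.+1)%N ->
  dotv (Mpowv j x) (Mpowv l x) = dotv (Mpowv j y) (Mpowv l y).
Proof.
move=> hx hy hg hjl; rewrite !dot_gram // /gramv; case: ifP => // ho.
have hm : ((j + l)./2 < d)%N.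
  move: hjl; rewrite -[(j + l)%N]odd_double_half ho add0n.
  lia.
by rewrite !gN_gen // /gfun hg.
Qed.

Lemma sep_lemma x y : inV x -> inV y -> genv x =1 genv y ->
  Bk x \in unitmx -> Bk y \in unitmx ->
  exists A, Defs.orthogonal A /\ act A x = y.
Proof.
move=> hx hy hg ux uy.
have hG : (Bk x)^T *m Bk x = (Bk y)^T *m Bk y.
  rewrite !BtB; apply/matrixP => j k; rewrite !mxE; apply: gram_eq => //.
  by have := ltn_ord j; have := ltn_ord k; lia.
have hH : (Bk x)^T *m (x.2 *m Bk x) = (Bk y)^T *m (y.2 *m Bk y).
  rewrite !BtMB; apply/matrixP => j k; rewrite !mxE; apply: gram_eq => //.
  by have := ltn_ord j; have := ltn_ord k; lia.
set Bi := invmx (Bk x).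
pose A := Bk y *m Bi.
have hAA : A^T *m A = 1%:M.
  rewrite /A trmx_mul -mulmxA (mulmxA (Bk y)^T) -hG !mulmxA -trmx_mul -mulmxA.
  by rewrite /Bi mulmxV // trmx1 mulmx1.
have orthA : Defs.orthogonal A by apply: mulmx1C.
exists A; split => //.
have uyt : (Bk y)^T \in unitmx by rewrite unitmx_tr.
rewrite /act [y in _ = y]surjective_pairing; congr pair.
  by rewrite -(Be0 x) /A -mulmxA /Bi mulKmx // Be0.
apply: (can_inj (mulKmx uyt)); apply: (can_inj (mulmxK uy)).
rewrite -[RHS]mulmxA -hH /A.
rewrite trmx_mul !mulmxA -hG -(mulmxA _ (Bk x)) /Bi mulmxV // mulmx1.
rewrite -!mulmxA; congr (_ *m (_ *m _)).
rewrite -hG mulmxA -trmx_mul mulmxV // trmx1 mul1mx //.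
Qed.

End Sep.


Section Poly.
Variable (K : numFieldType) (n : nat).
Local Notation d := n.+1.
Local Notation PR := {mpoly K[d + d * d]}.
Implicit Types (x y : pt K d) (A : 'M[K]_d).

Definition Xv : 'cV[PR]_d := \col_i 'X_(lshift (d * d) i).
Definition XM : 'M[PR]_d := \matrix_(a, b) 'X_(rshift d (mxvec_index a b)).

Lemma map_Xv x : map_mx (meval (coords x)) Xv = x.1.
Proof.
by apply/matrixP => i j; rewrite !mxE mevalXU /coords row_mxEl mxE ord1.
Qed.

Lemma map_XM x : map_mx (meval (coords x)) XM = x.2.
Proof.
by apply/matrixP => i j; rewrite !mxE mevalXU /coords row_mxEr mxvecE.
Qed.

Definition XW (k : nat) : 'cV[PR]_d := iter k (mulmx XM) Xv.

Lemma map_XW x k : map_mx (meval (coords x)) (XW k) = Mpowv k x.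
Proof.
elim: k => [|k IH]; first exact: map_Xv.
by rewrite /XW iterS map_mxM -/(XW k) IH map_XM.
Qed.

Definition genP (k : 'I_d) : PR := \sum_(i < d) (XW k i 0) * (XW k i 0).

Lemma pfun_genP k x : pfun (genP k) x = gen k x.
Proof.
rewrite /pfun /genP /gen /dotv rmorph_sum /=; apply: eq_bigr => i _.
by rewrite rmorphM /= -(map_XW x k) mxE.
Qed.

Definition BkP : 'M[PR]_d := \matrix_(i, k) (XW k i 0).

Lemma map_BkP x : map_mx (meval (coords x)) BkP = Bk x.
Proof. by apply/matrixP => i k; rewrite !mxE -map_XW mxE. Qed.

Lemma pfun_detBk x : pfun (\det BkP) x = \det (Bk x).
Proof. by rewrite /pfun -det_map_mx map_BkP. Qed.

Definition genT : d.-tuple PR := [tuple genP i | i < d].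

Lemma pfun_comp (b : {mpoly K[d]}) x : pfun (b \mPo genT) x = b.@[genv x].
Proof.
rewrite /pfun comp_mpoly_meval; apply: meval_eq => i.
by rewrite tnth_mktuple; exact: pfun_genP.
Qed.

End Poly.


Section NF.
Variable (K : numFieldType) (n : nat).
Local Notation d := n.+1.
Implicit Types (x y : pt K d) (A : 'M[K]_d) (c : 'I_d -> K).

Definition tri c : 'M[K]_d :=
  \matrix_(i, j) (if i == j.+1 :> nat then c i else if j == i.+1 :> nat then - c j else 0).

Definition ynf c : pt K d := (\col_i (if i == ord0 then c ord0 else 0), tri c).

Lemma inV_ynf c : inV (ynf c).
Proof.
rewrite /inV /=; apply/matrixP => i j; rewrite !mxE.
have [h1|h1] := eqVneq (j : nat) i.+1; have [h2|h2] := eqVneq (i : nat) j.+1 => //=.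
- lia.
- by rewrite opprK.
- by rewrite oppr0.
Qed.

Definition pic c (k : nat) : K := \prod_(i < k.+1) c (inord i).

Lemma ynf_low c k (i : 'I_d) : (k < i)%N -> Mpowv k (ynf c) i 0 = 0.
Proof.
elim: k i => [|k IH] i hki.
  by rewrite /= mxE; case: ifP => // /eqP hi; move: hki; rewrite hi.
rewrite MpowvS mxE; apply: big1 => j _; rewrite mxE.
case: ifP => [/eqP hij|_]; first by rewrite IH ?mulr0 //; lia.
case: ifP => [/eqP hji|_]; first by rewrite IH ?mulr0 //; lia.
by rewrite mul0r.
Qed.

Lemma ynf_diag c k (hk : (k < d)%N) : Mpowv k (ynf c) (Ordinal hk) 0 = pic c k.
Proof.
elim: k hk => [|k IH] hk.
  rewrite /pic big_ord1 /= mxE.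
  have -> : Ordinal hk = ord0 by apply: val_inj.
  by rewrite eqxx; congr c; apply: val_inj; rewrite /= inordK.
have hk' : (k < d)%N by lia.
rewrite MpowvS mxE (bigD1 (Ordinal hk')) //= big1 ?addr0.
  rewrite mxE /= eqxx IH mulrC [in RHS]/pic big_ord_recr /=; congr (_ * c _).
  by apply: val_inj; rewrite /= inordK.
move=> j hj; rewrite mxE /=.
case: ifP => [/eqP hij|_].
  by case/eqP: hj; apply: val_inj => /=; lia.
case: ifP => [/eqP hji|_]; first by rewrite ynf_low ?mulr0 //; lia.
by rewrite mul0r.
Qed.

Lemma Bk_ynf_trig c : is_trig_mx (Bk (ynf c))^T.
Proof.
apply/forallP => i; apply/forallP => j; apply/implyP => hij.
by rewrite !mxE ynf_low.
Qed.

Lemma det_Bk_ynf c : \det (Bk (ynf c)) = \prod_(i < d) pic c i.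
Proof.
rewrite -det_tr det_trig ?Bk_ynf_trig //; apply: eq_bigr => i _.
rewrite !mxE; have -> : i = Ordinal (ltn_ord i) by apply: val_inj.
by rewrite ynf_diag.
Qed.

Definition Dx x (k : nat) : K :=
  \det (\matrix_(i < k, j < k) dotv (Mpowv i x) (Mpowv j x)).

Lemma Dx_ynf c k : (k <= d)%N -> Dx (ynf c) k = \prod_(j < k) (pic c j) ^+ 2.
Proof.
move=> hk; rewrite /Dx.
pose L : 'M[K]_k := \matrix_(r, i) Mpowv i (ynf c) (inord r) 0.
have -> : \matrix_(i < k, j < k) dotv (Mpowv i (ynf c)) (Mpowv j (ynf c)) = L^T *m L.
  apply/matrixP => i j; rewrite !mxE /dotv.
  pose f (m : nat) := Mpowv i (ynf c) (inord m) 0 * Mpowv j (ynf c) (inord m) 0.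
  transitivity (\sum_(r < d) f r).
    by apply: eq_bigr => r _; rewrite /f inord_val.
  rewrite (bigID (fun r : 'I_d => (r < k)%N)) /= [X in _ + X]big1 ?addr0.
    rewrite -(big_ord_widen d f hk); apply: eq_bigr => r _; rewrite !mxE //.
  move=> r; rewrite -leqNgt => hr; rewrite /f ynf_low ?mul0r // inordK //.
  by have := ltn_ord i; lia.
have trL : is_trig_mx L^T.
  apply/forallP => i; apply/forallP => j; apply/implyP => hij.
  rewrite !mxE ynf_low // inordK //; have := ltn_ord j; lia.
rewrite det_mulmx det_tr -expr2 -det_tr det_trig // -prodrXl; apply: eq_bigr => i _.
rewrite !mxE.
have hi : (i < d)%N by have := ltn_ord i; lia.
have -> : (inord i : 'I_d) = Ordinal hi by apply: val_inj; rewrite /= inordK.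
by rewrite ynf_diag.
Qed.

End NF.


Lemma det_affine (K : comPzRingType) m (A A' : 'M[K]_m.+1) :
  (forall i j, (i != ord_max) || (j != ord_max) -> A i j = A' i j) ->
  \det A - \det A' =
  (A ord_max ord_max - A' ord_max ord_max) * \det (row' ord_max (col' ord_max A)).
Proof.
move=> hA.
have hc : forall j, cofactor A ord_max j = cofactor A' ord_max j.
  move=> j; rewrite /cofactor; congr (_ * \det _).
  apply/matrixP => a b; rewrite !mxE hA //.
  by rewrite eq_sym neq_lift.
rewrite !(expand_det_row _ ord_max) -sumrB (bigD1 ord_max) //= big1 ?addr0.
  by rewrite -hc -mulrBl /cofactor addnn -signr_odd odd_double expr0 mul1r.
move=> j hj; rewrite hc hA ?subrr // hj orbT //.
Qed.

Section Minors.
Variable (K : numFieldType) (n : nat).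
Local Notation d := n.+1.
Implicit Types (x y : pt K d) (A : 'M[K]_d) (c : 'I_d -> K) (g : 'I_d -> K).

Definition Dg g (k : nat) : K := \det (\matrix_(i < k, j < k) gramv (gfun g) i j).

Lemma Dg_Dx x k : inV x -> (k <= d)%N -> Dg (genv x) k = Dx x k.
Proof.
move=> hx hk; rewrite /Dg /Dx; congr (\det _); apply/matrixP => i j; rewrite !mxE.
rewrite dot_gram // /gramv; case: ifP => // ho.
rewrite gN_gen //; have := ltn_ord i; have := ltn_ord j.
move: ho; rewrite -[(i + j)%N]odd_double_half; case: odd => //= _; lia.
Qed.

Lemma Dg0 g : Dg g 0 = 1.
Proof. exact: det_mx00. Qed.

Lemma Dx0 x : Dx x 0 = 1.
Proof. exact: det_mx00. Qed.

Lemma Dg_inj g g' : (forall k, (k <= d)%N -> Dg g k = Dg g' k) ->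
  (forall k, (k < d)%N -> Dg g k != 0) -> g =1 g'.
Proof.
move=> hD hnz.
suff H : forall m, (m <= d)%N -> forall i, (i < m)%N -> gfun g i = gfun g' i.
  move=> i; have := H d (leqnn _) i (ltn_ord i).
  by rewrite /gfun inord_val.
elim=> [|m IH] hm i; first by [].
have IH' := IH (ltnW hm).
rewrite ltnS leq_eqVlt => /orP [/eqP ->|]; last exact: IH'.
pose A := \matrix_(i < m.+1, j < m.+1) gramv (gfun g) i j.
pose A' := \matrix_(i < m.+1, j < m.+1) gramv (gfun g') i j.
have hAA : (forall i j, (i != ord_max) || (j != ord_max) -> A i j = A' i j).
  move=> a b hab; rewrite !mxE /gramv; case: ifP => // ho.
  rewrite IH' //.
  have e := odd_double_half (a + b); rewrite ho add0n in e.
  have := ltn_ord a; have := ltn_ord b.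
  move: hab => /orP [] /eqP hab ha hb.
    have : (nat_of_ord a != m) by apply/eqP => e'; apply: hab; apply: val_inj.
    by lia.
  have : (nat_of_ord b != m) by apply/eqP => e'; apply: hab; apply: val_inj.
  by lia.
have h := @det_affine K m A A' hAA.
have hsub : row' ord_max (col' ord_max A) = \matrix_(i < m, j < m) gramv (gfun g) i j.
  by apply/matrixP => a b; rewrite !mxE !lift_max.
rewrite hsub -/(Dg g m) -/(Dg g m.+1) -/(Dg g' m.+1) hD // subrr in h.
have hmm : forall h : 'I_d -> K, gramv (gfun h) m m = gfun h m.
  move=> h0; rewrite /gramv addnn odd_double /= half_double.
  by rewrite addnn -signr_odd odd_double expr0 mul1r.
move: h; rewrite !mxE /= !hmm.
move=> /esym /eqP; rewrite mulf_eq0 (negbTE (hnz _ hm)) orbF subr_eq0 => /eqP //.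
Qed.

End Minors.


Section NFE.
Variable (K : numFieldType) (n : nat).
Local Notation d := n.+1.
Implicit Types (x y : pt K d) (A : 'M[K]_d) (c : 'I_d -> K) (g : 'I_d -> K).

Definition sg g (j : nat) : K := Dg g j.+1 * Dg g j.-1 / (Dg g j) ^+ 2.
Definition good x := forall k, (0 < k <= d)%N -> Dx x k != 0.

Lemma Dx_d x : Dx x d = \det (Bk x) ^+ 2.
Proof.
by rewrite /Dx -BtB det_mulmx det_tr expr2.
Qed.

Lemma good_nz x k : good x -> (k <= d)%N -> Dx x k != 0.
Proof.
case: k => [|k] hg hk; first by rewrite Dx0 oner_eq0.
by apply: hg; rewrite hk.
Qed.

Lemma good_unit x : good x -> Bk x \in unitmx.
Proof.
move=> hg; have := good_nz hg (leqnn d); rewrite Dx_d unitmxE unitfE.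
by rewrite expf_eq0.
Qed.

Lemma nf_exists x c : inV x -> good x ->
  (forall j : 'I_d, c j ^+ 2 = sg (genv x) j) ->
  exists A, Defs.orthogonal A /\ act A x = ynf c.
Proof.
move=> hx hg hc.
have hD k : (k <= d)%N -> Dg (genv x) k = Dx x k by move=> hk; apply: Dg_Dx.
have nz k : (k <= d)%N -> Dx x k != 0 by move=> hk; apply: good_nz.
have c1 : forall j, (j < d)%N -> pic c j ^+ 2 = Dx x j.+1 / Dx x j.
  elim=> [|j IH] hj.
    rewrite /pic big_ord1 hc /sg inordK // !hD // Dx0.
    by rewrite expr1n !mulr1 divr1.
  rewrite /pic big_ord_recr /= -/(pic c j) exprMn IH; last by lia.
  rewrite hc /sg inordK // !hD; try lia.
  have h1 := nz j.+1 (ltnW hj); have h2 := nz j (ltnW (ltnW hj)).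
  rewrite /=; field.
  by rewrite h1 h2.
have c2 : forall k, (k <= d)%N -> Dx (ynf c) k = Dx x k.
  move=> k hk; rewrite Dx_ynf //; elim: k hk => [|k IH] hk.
    by rewrite big_ord0 Dx0.
  rewrite big_ord_recr /= IH; last by lia.
  rewrite c1 // mulrC -mulrA mulVf ?mulr1 //; apply: nz; lia.
have hgg : genv (ynf c) =1 genv x.
  apply: Dg_inj.
    by move=> k hk; rewrite (Dg_Dx (inV_ynf c) hk) (Dg_Dx hx hk) c2.
  by move=> k hk; rewrite (Dg_Dx (inV_ynf c) (ltnW hk)) c2 ?nz //; lia.
have gy : good (ynf c) by move=> k /andP [_ hk]; rewrite c2 // nz.
apply: sep_lemma; [exact: hx | exact: inV_ynf | by move=> i; rewrite hgg
  | exact: good_unit | exact: good_unit].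
Qed.

Lemma pic1 k : pic (fun _ : 'I_d => 1 : K) k = 1.
Proof. by rewrite /pic big1. Qed.

Lemma good_ynf1 : good (ynf (fun _ : 'I_d => 1 : K)).
Proof.
move=> k /andP [_ hk]; rewrite Dx_ynf // big1 ?oner_eq0 // => j _.
by rewrite pic1 expr1n.
Qed.

End NFE.

Section Pos.
Variable (R : realFieldType) (n : nat).
Local Notation d := n.+1.

Lemma Dx_pos (x : pt R d) : good x -> forall k, (k <= d)%N -> 0 < Dx x k.
Proof.
move=> hg; elim=> [|k IH] hk; first by rewrite Dx0 ltr01.
have IH' := IH (ltnW hk).
pose G : 'M[R]_k.+1 := \matrix_(i, j) dotv (Mpowv i x) (Mpowv j x).
have dG : \det G = Dx x k.+1 by [].
have Gsym : G^T = G.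
  by apply/matrixP => i j; rewrite !mxE dotvC.
have nzk1 : Dx x k.+1 != 0 by apply: good_nz.
have Gu : G \in unitmx by rewrite unitmxE unitfE dG.
set e : 'cV[R]_k.+1 := delta_mx ord_max 0.
set u := invmx G *m e.
have r_eq : invmx G ord_max ord_max = (u^T *m G *m u) 0 0.
  rewrite /u trmx_mul trmx_inv Gsym -!mulmxA (mulmxA G) mulmxV // mul1mx.
  by rewrite /e -colE trmx_delta -rowE !mxE.
pose L : 'M[R]_(d, k.+1) := \matrix_(r, i) Mpowv i x r 0.
have GL : G = L^T *m L.
  by apply/matrixP => i j; rewrite !mxE; apply: eq_bigr => r _; rewrite !mxE.
have r_ge0 : 0 <= invmx G ord_max ord_max.
  rewrite r_eq; move: (u) => v; rewrite GL mulmxA -trmx_mul -mulmxA mxE.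
  apply: sumr_ge0 => r _; rewrite mxE -expr2; exact: sqr_ge0.
have r_val : invmx G ord_max ord_max = Dx x k / Dx x k.+1.
  rewrite /invmx Gu mxE mxE /cofactor addnn -signr_odd odd_double expr0 mul1r.
  rewrite dG mulrC; congr (_ / _); rewrite /Dx; congr (\det _).
  by apply/matrixP => i j; rewrite !mxE !lift_max.
rewrite r_val in r_ge0.
have nzr : Dx x k / Dx x k.+1 != 0 by rewrite mulf_neq0 ?invr_eq0 // lt0r_neq0.
have rpos : 0 < Dx x k / Dx x k.+1 by rewrite lt0r nzr.
have -> : Dx x k.+1 = Dx x k / (Dx x k / Dx x k.+1).
  by rewrite invf_div mulrA mulrC mulrA mulVf ?mul1r // lt0r_neq0.
by rewrite divr_gt0.
Qed.

Lemma sg_pos (x : pt R d) (j : nat) : inV x -> good x -> (j < d)%N -> 0 < sg (genv x) j.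
Proof.
move=> hx hg hj; rewrite /sg !Dg_Dx //; try lia.
apply: divr_gt0; first apply: mulr_gt0; try apply: Dx_pos => //; try lia.
by apply: exprn_gt0; apply: Dx_pos => //; lia.
Qed.

End Pos.


Section Even.
Variable (K : numFieldType) (d d' : nat).

Definition sgn (δ : {ffun 'I_d -> bool}) (c : 'I_d -> K) : 'I_d -> K :=
  fun j => if δ j then - c j else c j.

Definition alleven (m : 'X_{1..d}) : bool := [forall j, ~~ odd (m j)].

Lemma sign_sum (F : {mpoly K[d]}) (c : 'I_d -> K) :
  \sum_(δ : {ffun 'I_d -> bool}) F.@[sgn δ c] =
  \sum_(m <- msupp F) F@_m * (if alleven m then 2 ^+ d * \prod_j c j ^+ m j else 0).
Proof.
rewrite (eq_bigr (fun δ => \sum_(m <- msupp F) F@_m * \prod_i (sgn δ c) i ^+ m i));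
  last by move=> δ _; rewrite mevalE.
rewrite exchange_big /=; apply: eq_bigr => m _; rewrite -mulr_sumr; congr (_ * _).
rewrite /sgn.
rewrite -(bigA_distr_bigA (fun (j : 'I_d) (b : bool) => (if b then - c j else c j) ^+ m j)) /=.
under eq_bigr => j _ do rewrite big_bool /= exprNn.
case: ifP => [/forallP he|/negbT].
  have -> : (2:K) ^+ d = \prod_(j < d) 2 by rewrite prodr_const card_ord.
  rewrite -big_split /=; apply: eq_bigr => j _.
  by rewrite -signr_odd (negbTE (he j)) expr0 mul1r mulr2n mulrDl mul1r.
rewrite negb_forall => /existsP [j /negPn hj].
by apply/eqP/prodf_eq0; exists j => //; rewrite -signr_odd hj expr1 mulN1r addNr.
Qed.

Definition CE (F : {mpoly K[d]}) (num den : 'I_d -> {mpoly K[d']}) (N : nat) : {mpoly K[d']} :=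
  \sum_(m <- msupp F) (if alleven m then
      F@_m *: \prod_j (num j ^+ (m j)./2 * den j ^+ (N - (m j)./2)) else 0).

Lemma CE_eval (F : {mpoly K[d]}) num den N (g : 'I_d' -> K) (c : 'I_d -> K) :
  (msize F <= N)%N -> (forall j, (den j).@[g] != 0) ->
  (forall j, (num j).@[g] = c j ^+ 2 * (den j).@[g]) ->
  (CE F num den N).@[g] =
  (\prod_j (den j).@[g] ^+ N) / 2 ^+ d * \sum_(δ : {ffun 'I_d -> bool}) F.@[sgn δ c].
Proof.
move=> hN hden hnum; rewrite sign_sum rmorph_sum /= mulr_sumr; apply: eq_big_seq => m hm.
case: ifP => he; last by rewrite meval0 !mulr0.
rewrite mevalZ rmorph_prod /= mulrCA; congr (_ * _).
rewrite -mulrA mulKf; last by rewrite expf_neq0 // pnatr_eq0.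
rewrite -big_split /=; apply: eq_bigr => j _.
rewrite rmorphM /= !rmorphXn /= hnum exprMn -exprM.
have hj : ((m j)./2 <= N)%N.
  have := msize_mdeg_lt hm; rewrite mdegE (bigD1 j) //=.
  lia.
have -> : (2 * (m j)./2 = m j)%N.
  have := odd_double_half (m j); move/forallP: he => /(_ j) /negbTE ->.
  by rewrite add0n -mul2n.
by rewrite -mulrA -exprD subnKC // mulrC.
Qed.

End Even.


Section PS.
Variable K : numFieldType.

Lemma nonroot (p : {poly K}) : p != 0 -> exists t, p.[t] != 0.
Proof.
move=> hp; set rs := [seq (i%:R : K) | i <- iota 0 (size p)].
case: (boolP (all (root p) rs)) => [hall | /allPn [t _ ht]]; last by exists t.
have hu : uniq rs.
  rewrite map_inj_uniq ?iota_uniq // => a b /eqP; rewrite eqr_nat => /eqP //.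
have := max_poly_roots hp hall hu; rewrite size_map size_iota ltnn //.
Qed.

Lemma psum_nz (I : finType) (z : I -> K) (i0 : I) : z i0 != 0 ->
  exists k, (0 < k <= #|I|)%N /\ \sum_i z i ^+ k != 0.
Proof.
move=> hz.
case: (boolP [forall k : 'I_#|I|.+1, (0 < k)%N ==> (\sum_i z i ^+ k == 0)]);
  last first.
  rewrite negb_forall => /existsP [k]; rewrite negb_imply => /andP [hk hs].
  by exists k; rewrite hk -ltnS ltn_ord.
move=> /forallP H.
pose f (i : I) : {poly K} :=
  if i == i0 then 'X else if z i == z i0 then 1 else 'X - (z i)%:P.
pose L := \prod_i f i.
have hsz : (size L <= #|I|.+1)%N.
  apply: leq_trans (size_prod_leq _ _) _.
  have : (\sum_i size (f i) <= \sum_(i : I) 2)%N.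
    apply: leq_sum => i _; rewrite /f.
    case: ifP => _; first by rewrite size_polyX.
    case: ifP => _; first by rewrite size_poly1.
    by rewrite size_XsubC.
  rewrite sum_nat_const cardE /= => h.
  lia.
have L0 : L`_0 = 0.
  rewrite -horner_coef0 /L horner_prod; apply/eqP/prodf_eq0.
  by exists i0 => //; rewrite /f eqxx hornerX.
have Lz : forall j, L.[z j] = if z j == z i0 then L.[z i0] else 0.
  move=> j; case: ifP => [/eqP -> //|hj].
  rewrite /L horner_prod; apply/eqP/prodf_eq0; exists j => //.
  rewrite /f hj; case: ifP => [/eqP e|_]; first by rewrite e eqxx in hj.
  by rewrite hornerXsubC subrr.
have Lz0 : L.[z i0] != 0.
  rewrite /L horner_prod; apply/prodf_neq0 => i _; rewrite /f.
  case: ifP => _; first by rewrite hornerX.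
  case: ifP => hi; first by rewrite hornerC oner_eq0.
  by rewrite hornerXsubC subr_eq0 eq_sym hi.
have : \sum_j L.[z j] = 0.
  rewrite (eq_bigr (fun j => \sum_(k < #|I|.+1) L`_k * z j ^+ k)); last first.
    by move=> j _; rewrite (horner_coef_wide _ hsz).
  rewrite exchange_big /= big1 // => k _; rewrite -mulr_sumr.
  case: (posnP k) => [k0|kp].
    by rewrite k0 L0 mul0r.
  by have := H k; rewrite kp /= => /eqP ->; rewrite mulr0.
have hs : \sum_j L.[z j] = L.[z i0] * (\sum_j (z j == z i0 : nat))%:R.
  rewrite natr_sum mulr_sumr; apply: eq_bigr => j _; rewrite Lz.
  by case: ifP => _; [rewrite mulr1 | rewrite mulr0].
rewrite hs => /eqP; rewrite mulf_eq0 (negbTE Lz0) /= pnatr_eq0 (bigD1 i0) //= eqxx.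
done.
Qed.

End PS.


Section Line.
Variable (K : numFieldType) (n : nat).
Local Notation d := n.+1.
Local Notation NN := (d + d * d)%N.

Definition xt (x1 x2 : pt K d) (t : K) : pt K d :=
  (x1.1 + t *: (x2.1 - x1.1), x1.2 + t *: (x2.2 - x1.2)).

Lemma inV_xt x1 x2 t : inV x1 -> inV x2 -> inV (xt x1 x2 t).
Proof.
move=> h1 h2; rewrite /inV /= in h1 h2 *; apply/matrixP => i j.
have e1 := congr1 (fun A : 'M[K]_d => A i j) h1; have e2 := congr1 (fun A : 'M[K]_d => A i j) h2.
move: e1 e2; rewrite !mxE => e1 e2; rewrite e1 e2; ring.
Qed.

Lemma coords_xt x1 x2 t i :
  coords (xt x1 x2 t) i = coords x1 i + t * (coords x2 i - coords x1 i).
Proof.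
rewrite /coords -(splitK i); case: (split i) => [j|k] /=.
  by rewrite !row_mxEl !mxE.
rewrite !row_mxEr; case/mxvec_indexP: k => a b; rewrite !mxvecE !mxE //.
Qed.

Lemma mmap_horner (q : {mpoly K[NN]}) (v : 'I_NN -> {poly K}) (t : K) :
  (mmap polyC v q).[t] = q.@[fun i => (v i).[t]].
Proof.
rewrite -horner_evalE /mmap rmorph_sum mevalE; apply: eq_bigr => m _.
rewrite rmorphM /= horner_evalE hornerC /mmap1 rmorph_prod; congr (_ * _).
by apply: eq_bigr => i _; rewrite rmorphXn /= horner_evalE.
Qed.

Lemma line_exists (q h : {mpoly K[NN]}) (x1 x2 : pt K d) :
  inV x1 -> inV x2 -> pfun q x1 != 0 -> pfun h x2 != 0 ->
  exists x, inV x /\ pfun q x != 0 /\ pfun h x != 0.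
Proof.
move=> h1 h2 hq hh.
pose v i : {poly K} := (coords x1 i)%:P + 'X * (coords x2 i - coords x1 i)%:P.
have ev : forall (p : {mpoly K[NN]}) t, (mmap polyC v p).[t] = pfun p (xt x1 x2 t).
  move=> p t; rewrite mmap_horner /pfun; apply: meval_eq => i.
  by rewrite coords_xt /v hornerD hornerC hornerM hornerX hornerC.
have ev0 : forall (p : {mpoly K[NN]}), (mmap polyC v p).[0] = pfun p x1.
  move=> p; rewrite ev /pfun; apply: meval_eq => i.
  by rewrite coords_xt mul0r addr0.
have ev1 : forall (p : {mpoly K[NN]}), (mmap polyC v p).[1] = pfun p x2.
  move=> p; rewrite ev /pfun; apply: meval_eq => i.
  by rewrite coords_xt mul1r addrC subrK.
have nzq : mmap polyC v q != 0.
  by apply/eqP => e; move: hq; rewrite -ev0 e horner0 eqxx.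
have nzh : mmap polyC v h != 0.
  by apply/eqP => e; move: hh; rewrite -ev1 e horner0 eqxx.
have [t ht] := nonroot (mulf_neq0 nzq nzh).
exists (xt x1 x2 t); split; first exact: inV_xt.
by move: ht; rewrite hornerM mulf_eq0 negb_or !ev => /andP [].
Qed.

End Line.

Section SymNF.
Variable (K : numFieldType) (n : nat).
Local Notation d := n.+1.
Local Notation NN := (d + d * d)%N.
Local Notation PC := {mpoly K[d]}.

Definition Yv : 'cV[PC]_d := \col_i (if i == ord0 then 'X_ord0 else 0).
Definition YM : 'M[PC]_d :=
  \matrix_(i, j) (if i == j.+1 :> nat then 'X_i else if j == i.+1 :> nat then - 'X_j else 0).

Definition tT (T : 'M[K]_d) : NN.-tuple PC :=
  let TP := map_mx (fun a => a%:MP) T in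
  [tuple row_mx (TP *m Yv)^T (mxvec (TP *m YM *m TP^T)) 0 i | i < NN].

Lemma tT_eval T c i : (tnth (tT T) i).@[c] = coords (act T (ynf c)) i.
Proof.
rewrite tnth_mktuple.
have hT : map_mx (meval c) (map_mx (fun a => a%:MP) T) = T.
  by apply/matrixP => a b; rewrite !mxE mevalC.
have hv : map_mx (meval c) Yv = (ynf c).1.
  by apply/matrixP => a b; rewrite !mxE; case: ifP => _; rewrite ?mevalXU ?meval0.
have hM : map_mx (meval c) YM = (ynf c).2.
  apply/matrixP => a b; rewrite !mxE.
  case: ifP => _; first by rewrite mevalXU.
  by case: ifP => _; rewrite ?mevalN ?mevalXU ?meval0.
have := congr1 (fun A : 'rV[K]_NN => A 0 i) (map_row_mx (meval c) (map_mx (fun a => a%:MP) T *m Yv)^T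
   (mxvec (map_mx (fun a => a%:MP) T *m YM *m (map_mx (fun a => a%:MP) T)^T))).
rewrite mxE => ->; rewrite /coords /act /=.
by rewrite -map_trmx map_mxvec !map_mxM -map_trmx hT hv hM.
Qed.

Lemma pfun_tT T (p : {mpoly K[NN]}) c : pfun p (act T (ynf c)) = (p \mPo tT T).@[c].
Proof.
by rewrite comp_mpoly_meval /pfun; apply: meval_eq => i; rewrite tT_eval.
Qed.

End SymNF.


Lemma meval_prod (K : comNzRingType) m (v : 'I_m -> K) (I : Type) (r : seq I) (F : I -> {mpoly K[m]}) :
  (\prod_(i <- r) F i).@[v] = \prod_(i <- r) (F i).@[v].
Proof.
elim: r => [|a r IH]; first by rewrite !big_nil meval1.
by rewrite !big_cons mevalM IH.
Qed.

Lemma meval_exp (K : comNzRingType) m (v : 'I_m -> K) (p : {mpoly K[m]}) k :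
  (p ^+ k).@[v] = p.@[v] ^+ k.
Proof.
elim: k => [|k IH]; first by rewrite !expr0 meval1.
by rewrite !exprS mevalM IH.
Qed.

Section Main.
Variable (K : numFieldType) (n : nat).
Local Notation d := n.+1.
Local Notation NN := (d + d * d)%N.
Implicit Types (x y : pt K d).

Definition gramP (i j : nat) : {mpoly K[d]} :=
  if odd (i + j) then 0 else (-1) ^+ (i + (i + j)./2) *: 'X_(inord (i + j)./2).

Definition DgP (k : nat) : {mpoly K[d]} := \det (\matrix_(i < k, j < k) gramP i j).

Lemma DgP_eval k g : (DgP k).@[g] = Dg g k.
Proof.
rewrite /DgP -det_map_mx /Dg; congr (\det _); apply/matrixP => i j.
rewrite !mxE /gramP /gramv; case: ifP => _; first by rewrite raddf0.
by rewrite /= mevalZ mevalXU.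
Qed.

Definition Eg : {mpoly K[d]} := \prod_(k < d) DgP k.+1.

Definition goodb x := [forall k : 'I_d, Dx x k.+1 != 0].

Lemma goodP x : reflect (good x) (goodb x).
Proof.
apply: (iffP forallP) => h.
  move=> k /andP [hk1 hk2]; have hk : (k.-1 < d)%N by lia.
  have := h (Ordinal hk).
  by rewrite /= prednK.
by move=> k; apply: h; rewrite ltn_ord.
Qed.

Lemma Eg_eval x : inV x -> Eg.@[genv x] = \prod_(k < d) Dx x k.+1.
Proof.
move=> hx; rewrite /Eg meval_prod; apply: eq_bigr => k _.
by rewrite DgP_eval Dg_Dx // ltn_ord.
Qed.

Lemma Eg_nz x : inV x -> (Eg.@[genv x] != 0) = goodb x.
Proof.
move=> hx; rewrite Eg_eval //; apply/idP/idP.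
  by move/prodf_neq0 => h; apply/forallP => k; apply: h.
by move/forallP => h; apply/prodf_neq0 => k _; apply: h.
Qed.

Definition numP (j : 'I_d) : {mpoly K[d]} := DgP j.+1 * DgP j.-1.
Definition denP (j : 'I_d) : {mpoly K[d]} := DgP j ^+ 2.

Hypothesis Hsq : forall x : pt K d, inV x -> good x ->
  forall j : 'I_d, exists r, r ^+ 2 = sg (genv x) j.

Lemma choose_c x : inV x -> good x ->
  exists c : 'I_d -> K, forall j, c j ^+ 2 = sg (genv x) j.
Proof.
move=> hx hg.
have h : forall j : 'I_d, exists r, r ^+ 2 == sg (genv x) j.
  by move=> j; have [r hr] := Hsq hx hg j; exists r; rewrite hr.
by exists (fun j => xchoose (h j)) => j; apply/eqP; exact: (xchooseP (h j)).
Qed.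

Lemma den_nz x (j : 'I_d) : inV x -> good x -> (denP j).@[genv x] != 0.
Proof.
move=> hx hg; rewrite /denP meval_exp DgP_eval Dg_Dx //; last by apply: ltnW.
by rewrite expf_neq0 // good_nz // ltnW.
Qed.

Lemma num_eq x (c : 'I_d -> K) : inV x -> good x ->
  (forall j, c j ^+ 2 = sg (genv x) j) ->
  forall j, (numP j).@[genv x] = c j ^+ 2 * (denP j).@[genv x].
Proof.
move=> hx hg hc j; rewrite hc /sg /numP /denP rmorphM rmorphXn /= !DgP_eval.
rewrite divfK // expf_neq0 // Dg_Dx // ?good_nz // ltnW //.
Qed.

Lemma sgn_sq (c : 'I_d -> K) (δ : {ffun 'I_d -> bool}) j : (sgn δ c j) ^+ 2 = c j ^+ 2.
Proof. by rewrite /sgn; case: (δ j) => //; rewrite sqrrN. Qed.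

Theorem gen_main : generates_invariant_field K d.
Proof.
split; first by move=> k; exists (@genP K n k) => x _; exact: pfun_genP.
split; first by move=> k A hA x _; exact: gen_inv.
move=> p q [x1 [hx1 hq1]] hinv.
have hh1 : pfun (Eg \mPo genT K n) (ynf (fun _ : 'I_d => 1 : K)) != 0.
  by rewrite pfun_comp Eg_nz; [apply/goodP; exact: good_ynf1 | exact: inV_ynf].
have [xs [hxs [hqs hhs]]] := line_exists hx1 (inV_ynf (fun _ : 'I_d => 1 : K)) hq1 hh1.
rewrite pfun_comp Eg_nz // in hhs; move/goodP: hhs => hgs.
have [cs hcs] := choose_c hxs hgs.
have [As [oAs hAs]] := nf_exists hxs hgs hcs.
set T := As^T.
have hT : act T (ynf cs) = xs by rewrite -hAs act_comp orthoC // act1.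
have oT : Defs.orthogonal T by apply: ortho_tr.
pose P' := p \mPo tT T.
pose Q' := q \mPo tT T.
pose z (δ : {ffun 'I_d -> bool}) := Q'.@[sgn δ cs].
have z0 : z [ffun => false] != 0.
  rewrite /z (@meval_eq _ _ _ cs); last by move=> j; rewrite /sgn ffunE.
  by rewrite -pfun_tT hT.
have [k [hk hsum]] := psum_nz z0.
have k0 : (0 < k)%N by case/andP: hk.
pose Fa := P' * Q' ^+ k.-1.
pose Fb := Q' ^+ k.
pose N := maxn (msize Fa) (msize Fb).
have hNa : (msize Fa <= N)%N by rewrite leq_maxl.
have hNb : (msize Fb <= N)%N by rewrite leq_maxr.
have ce : forall x (c : 'I_d -> K) F, inV x -> good x ->
    (forall j, c j ^+ 2 = sg (genv x) j) -> (msize F <= N)%N ->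
    (CE F numP denP N).@[genv x] =
    (\prod_j (denP j).@[genv x] ^+ N) / 2 ^+ d * \sum_(δ : {ffun 'I_d -> bool}) F.@[sgn δ c].
  move=> x c F hx hg hc hF; apply: CE_eval => // j; first exact: den_nz.
  exact: num_eq.
exists (Eg * CE Fa numP denP N), (Eg * CE Fb numP denP N); split.
  exists xs; split => //; rewrite mevalM mulf_neq0 //.
    by rewrite Eg_nz //; apply/goodP.
  rewrite (ce xs cs) // mulf_neq0 //.
    rewrite mulf_neq0 ?invr_eq0 ?expf_neq0 ?pnatr_eq0 //.
    by apply/prodf_neq0 => j _; rewrite expf_neq0 // den_nz.
  move: hsum; rewrite /z; congr (_ != _); apply: eq_bigr => δ _.
  by rewrite /Fb meval_exp.
move=> x hx; case: (boolP (goodb x)) => hg; last first.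
  have e0 : Eg.@[genv x] = 0 by apply/eqP; rewrite -[_ == 0]negbK Eg_nz // hg.
  by rewrite !mevalM e0 !mul0r !mulr0.
move/goodP: hg => hg; have [c hc] := choose_c hx hg.
rewrite !mevalM !(ce x c) //.
set E := Eg.@[genv x]; set D := _ / _.
have key : pfun p x * \sum_(δ : {ffun 'I_d -> bool}) Fb.@[sgn δ c] =
           pfun q x * \sum_(δ : {ffun 'I_d -> bool}) Fa.@[sgn δ c].
  rewrite !mulr_sumr; apply: eq_bigr => δ _.
  have hc' : forall j, sgn δ c j ^+ 2 = sg (genv x) j by move=> j; rewrite sgn_sq hc.
  have [A [oA hA]] := nf_exists hx hg hc'.
  have e := hinv (T *m A) (ortho_mul oT oA) x hx.
  rewrite -act_comp hA !pfun_tT -/P' -/Q' in e.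
  rewrite /Fa /Fb !mevalM !meval_exp -(prednK k0) exprS mulrA -e.
  by rewrite /= (mulrC (P'.@[_])) mulrA.
transitivity (E * (D * (pfun p x * \sum_(δ : {ffun 'I_d -> bool}) Fb.@[sgn δ c]))); first ring.
rewrite key; ring.
Qed.


End Main.


Theorem sep_main (K : numFieldType) n : separates_orbits K n.+1.
Proof.
exists (pred1 (\det (BkP K n))); split.
  exists (ynf (fun _ : 'I_n.+1 => 1 : K)); split; first exact: inV_ynf.
  exists (\det (BkP K n)); split; first by rewrite /= eqxx.
  by rewrite pfun_detBk det_Bk_ynf big1 ?oner_eq0 // => i _; rewrite pic1.
move=> x y [hx [p1 [hS1 h1]]] [hy [p2 [hS2 h2]]].
move: hS1 hS2 => /= /eqP e1 /eqP e2; subst p1 p2.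
rewrite pfun_detBk in h1; rewrite pfun_detBk in h2.
split.
  by move=> [A [oA <-]] k; rewrite gen_inv.
move=> hg; apply: sep_lemma => //; by rewrite unitmxE unitfE.
Qed.

Theorem proposition3p17 (R : realType) (d : nat) : (2 <= d)%N ->
  generates_invariant_field R[i] d /\ generates_invariant_field R d /\
  separates_orbits R[i] d /\ separates_orbits R d.
Proof.
case: d => // n _.
split.
  apply: gen_main => x hx hg j.
  by exists (sqrtc (sg (genv x) j)); rewrite sqr_sqrtc.
split.
  apply: gen_main => x hx hg j.
  exists (Num.sqrt (sg (genv x) j)); rewrite sqr_sqrtr // ltW //.
  by apply: sg_pos.
split; exact: sep_main.
Qed.
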